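(* Identify the tangent space of $\mathbb O'P^2$ at $P_0=[1,0,0]$ with $\mathbb O'^2$ via the chart $[1,u,v]\mapsto(u,v)$, a pair $(a,b)$ corresponding to the tangent vector with $du=a$, $dv=b$. Then the Riemann curvature tensor of $(\mathbb O'P^2,g)$ at $P_0$ is $$\begin{aligned}R\big((a,b),(c,d),(e,f),(g,h)\big)=&\,4\langle a,e\rangle\langle c,g\rangle-4\langle c,e\rangle\langle a,g\rangle+4\langle b,f\rangle\langle d,h\rangle-4\langle d,f\rangle\langle b,h\rangle\\&-\langle e\bar d,g\bar b\rangle+\langle e\bar b,g\bar d\rangle-\langle c\bar f,a\bar h\rangle+\langle a\bar f,c\bar h\rangle-\langle a\bar d-c\bar b,\ g\bar f-e\bar h\rangle.\end{aligned}$$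
   Context: Para-octonions $\mathbb O'=\mathbb H\oplus\mathbb H$ with product $(q_1,q_2)(p_1,p_2)=(q_1p_1+\bar p_2q_2,\ p_2q_1+q_2\bar p_1)$, conjugation $\overline{(q_1,q_2)}=(\bar q_1,-q_2)$, $\langle a,b\rangle=\mathrm{Re}(a\bar b)$ (signature $(4,4)$), $|a|^2=\langle a,a\rangle$. $\mathbb O'P^2=\mathcal U/_\sim$ where $\mathcal U=\{(1,y,z):1+|y|^2+|z|^2>0\}\cup\{(x,1,z):|x|^2+1+|z|^2>0\}\cup\{(x,y,1):|x|^2+|y|^2+1>0\}$ and $[a,b,c]\sim[d,e,f]$ iff $(a,b,c)=(d\lambda,e\lambda,f\lambda)$ with $|\lambda|^2>0$; charts $[1,u,v]\mapsto(u,v)$ etc. Metric $g$ on each chart, for tangent vector $(du,dv)=(\xi,\eta)$: $ds^2=\frac{|\xi|^2(1+|v|^2)+|\eta|^2(1+|u|^2)-2\mathrm{Re}[(u\bar v)(\eta\bar\xi)]}{(1+|u|^2+|v|^2)^2}$. Curvature convention: in coordinates in which the first derivatives of the metric vanish at the point, $R_{\alpha\beta\gamma\delta}=\tfrac12\big[\partial_\alpha\partial_\delta g_{\beta\gamma}+\partial_\beta\partial_\gamma g_{\alpha\delta}-\partial_\beta\partial_\delta g_{\alpha\gamma}-\partial_\alpha\partial_\gamma g_{\beta\delta}\big]$. *)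

(* Defs.v *)
From Stdlib Require Import Reals.
From Coquelicot Require Import Coquelicot.
Open Scope R_scope.

(** * Quaternions H = R^4, basis 1,i,j,k with ij = k *)
Record quat := Quat { q0 : R; q1 : R; q2 : R; q3 : R }.

Definition qadd (a b : quat) : quat :=
  Quat (q0 a + q0 b) (q1 a + q1 b) (q2 a + q2 b) (q3 a + q3 b).
Definition qopp (a : quat) : quat := Quat (- q0 a) (- q1 a) (- q2 a) (- q3 a).
Definition qscal (t : R) (a : quat) : quat :=
  Quat (t * q0 a) (t * q1 a) (t * q2 a) (t * q3 a).
Definition qmul (a b : quat) : quat :=
  Quat (q0 a * q0 b - q1 a * q1 b - q2 a * q2 b - q3 a * q3 b)
       (q0 a * q1 b + q1 a * q0 b + q2 a * q3 b - q3 a * q2 b)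
       (q0 a * q2 b - q1 a * q3 b + q2 a * q0 b + q3 a * q1 b)
       (q0 a * q3 b + q1 a * q2 b - q2 a * q1 b + q3 a * q0 b).
Definition qconj (a : quat) : quat := Quat (q0 a) (- q1 a) (- q2 a) (- q3 a).

(** * Para-octonions O' = H (+) H *)
Record poct := POct { oa : quat; ob : quat }.

Definition oadd (x y : poct) : poct := POct (qadd (oa x) (oa y)) (qadd (ob x) (ob y)).
Definition oopp (x : poct) : poct := POct (qopp (oa x)) (qopp (ob x)).
Definition osub (x y : poct) : poct := oadd x (oopp y).
Definition oscal (t : R) (x : poct) : poct := POct (qscal t (oa x)) (qscal t (ob x)).
Definition omul (x y : poct) : poct :=
  POct (qadd (qmul (oa x) (oa y)) (qmul (qconj (ob y)) (ob x)))
       (qadd (qmul (ob y) (oa x)) (qmul (ob x) (qconj (oa y)))).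
Definition oconj (x : poct) : poct := POct (qconj (oa x)) (qopp (ob x)).
Definition ore (x : poct) : R := q0 (oa x).
Definition oinner (x y : poct) : R := ore (omul x (oconj y)).
Definition onorm2 (x : poct) : R := oinner x x.

(** * The chart [1,u,v] |-> (u,v): points and tangent vectors are in O'^2 *)
Definition pt := (poct * poct)%type.
Definition padd (p q : pt) : pt := (oadd (fst p) (fst q), oadd (snd p) (snd q)).
Definition pscal (t : R) (p : pt) : pt := (oscal t (fst p), oscal t (snd p)).
Definition ozero : poct := POct (Quat 0 0 0 0) (Quat 0 0 0 0).
Definition P0 : pt := (ozero, ozero).

Definition ds2 (p : pt) (X : pt) : R :=
  let u := fst p in let v := snd p in let xi := fst X in let eta := snd X in
  (onorm2 xi * (1 + onorm2 v) + onorm2 eta * (1 + onorm2 u)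
   - 2 * ore (omul (omul u (oconj v)) (omul eta (oconj xi))))
  / (1 + onorm2 u + onorm2 v) ^ 2.

Definition gmet (p : pt) (X Y : pt) : R :=
  (ds2 p (padd X Y) - ds2 p X - ds2 p Y) / 2.

Definition quat_coord (k : nat) (q : quat) : R :=
  match k with 0 => q0 q | 1 => q1 q | 2 => q2 q | _ => q3 q end.
Definition oct_coord (k : nat) (x : poct) : R :=
  if Nat.ltb k 4 then quat_coord k (oa x) else quat_coord (k - 4) (ob x).
Definition pt_coord (k : nat) (p : pt) : R :=
  if Nat.ltb k 8 then oct_coord k (fst p) else oct_coord (k - 8) (snd p).

Definition kron (i j : nat) : R := if Nat.eqb i j then 1 else 0.
Definition quat_e (k : nat) : quat := Quat (kron k 0) (kron k 1) (kron k 2) (kron k 3).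
Definition qzero : quat := Quat 0 0 0 0.
Definition oct_e (k : nat) : poct :=
  if Nat.ltb k 4 then POct (quat_e k) qzero else POct qzero (quat_e (k - 4)).
Definition pt_e (i : nat) : pt :=
  if Nat.ltb i 8 then (oct_e i, ozero) else (ozero, oct_e (i - 8)).

Definition partial (i : nat) (f : pt -> R) (p : pt) : R :=
  Derive (fun t => f (padd p (pscal t (pt_e i)))) 0.

Definition gcomp (i j : nat) (p : pt) : R := gmet p (pt_e i) (pt_e j).

Definition d2g (a b c d : nat) : R := partial a (partial b (gcomp c d)) P0.

(** Curvature components at P0 by the stated convention (valid since the first
    derivatives of the metric vanish at P0 in these coordinates):
    R_{abcd} = 1/2 [ d_a d_d g_{bc} + d_b d_c g_{ad} - d_b d_d g_{ac} - d_a d_c g_{bd} ] *)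
Definition Rcomp (a b c d : nat) : R :=
  / 2 * (d2g a d b c + d2g b c a d - d2g b d a c - d2g a c b d).

Definition sum16 (f : nat -> R) : R := sum_f_R0 f 15.

Definition Rtensor (X Y Z W : pt) : R :=
  sum16 (fun a => sum16 (fun b => sum16 (fun c => sum16 (fun d =>
    Rcomp a b c d * pt_coord a X * pt_coord b Y * pt_coord c Z * pt_coord d W)))).

(* Main.v *)
Require Import Defs.
From Stdlib Require Import Reals Lra.
From Coquelicot Require Import Coquelicot.
Open Scope R_scope.

Definition F (c0 c3 c4 c5 e1 e2 e3 s t : R) : R :=
  (c0 + c3*s^2 + c4*s*t + c5*t^2) / (1 + e1*s^2 + e2*s*t + e3*t^2)^2.
Definition G (c0 c3 c4 e1 e2 s : R) : R :=
  c4*s/(1+e1*s^2)^2 - 2*(c0+c3*s^2)*(e2*s)/(1+e1*s^2)^3.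
Lemma inner c0 c3 c4 c5 e1 e2 e3 s : 1 + e1*s^2 <> 0 ->
  is_derive (fun t => F c0 c3 c4 c5 e1 e2 e3 s t) 0 (G c0 c3 c4 e1 e2 s).
Proof. intros H. unfold F, G. auto_derive.
 - replace (1 + e1 * (s * (s * 1)) + e2 * s * 0 + e3 * (0 * (0 * 1))) with (1+e1*s^2) by ring.
   intros H2. apply H. nra.
 - replace (1 + e1 * (s * (s * 1)) + e2 * s * 0 + e3 * (0 * (0 * 1))) with (1+e1*s^2) by ring.
   field. auto.
Qed.
Lemma outer c0 c3 c4 e1 e2 : is_derive (G c0 c3 c4 e1 e2) 0 (c4 - 2*c0*e2).
Proof. unfold G. auto_derive.
 - split. replace (1 + e1 * (0 * (0 * 1))) with 1 by ring. lra. split; auto.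
   replace (1 + e1 * (0 * (0 * 1))) with 1 by ring. lra.
 - replace (1 + e1 * (0 * (0 * 1))) with 1 by ring. field.
Qed.
Lemma loc_pos e1 : locally 0 (fun s => 1 + e1*s^2 <> 0).
Proof.
  assert (Hp : 0 < / (1 + Rabs e1)). { apply Rinv_0_lt_compat. pose proof (Rabs_pos e1). lra. }
  exists (mkposreal _ Hp). intros y Hy. simpl in Hy.
  unfold ball in Hy; simpl in Hy; unfold AbsRing_ball, abs, minus, plus, opp in Hy; simpl in Hy.
  rewrite Ropp_0, Rplus_0_r in Hy.
  pose proof (Rabs_pos e1). pose proof (Rabs_pos y).
  assert (Hy2 : Rabs y * (1 + Rabs e1) < 1).
  { apply (Rmult_lt_compat_r (1 + Rabs e1)) in Hy; [|lra]. rewrite Rinv_l in Hy; lra. }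
  assert (Hyy : Rabs y < 1) by nra.
  assert (Hl : Rabs (e1 * y^2) < 1).
  { rewrite Rabs_mult, <- RPow_abs. simpl. nra. }
  intros Hc. assert (He : e1*y^2 = -1) by lra. rewrite He in Hl. unfold Rabs in Hl. destruct (Rcase_abs (-1)); lra.
Qed.
Lemma mixed c0 c3 c4 c5 e1 e2 e3 :
  Derive (fun s => Derive (fun t => F c0 c3 c4 c5 e1 e2 e3 s t) 0) 0 = c4 - 2*c0*e2.
Proof.
  rewrite (Derive_ext_loc _ (G c0 c3 c4 e1 e2)).
  - apply is_derive_unique, outer.
  - eapply filter_imp; [|apply (loc_pos e1)]. intros s Hs. apply is_derive_unique, inner; auto.
Qed.
Lemma first c0 c5 e3 : Derive (fun t => F c0 0 0 c5 0 0 e3 0 t) 0 = 0.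
Proof. apply is_derive_unique. unfold F. auto_derive.
 - replace (1 + 0 * (0 * (0 * 1)) + 0 * 0 * 0 + e3 * (0 * (0 * 1))) with 1 by ring. lra.
 - replace (1 + 0 * (0 * (0 * 1)) + 0 * 0 * 0 + e3 * (0 * (0 * 1))) with 1 by ring. field.
Qed.

Definition Ng (p X Y : pt) : R :=
  oinner (fst X) (fst Y) * (1 + onorm2 (snd p)) + oinner (snd X) (snd Y) * (1 + onorm2 (fst p))
  - ore (omul (omul (fst p) (oconj (snd p))) (oadd (omul (snd Y) (oconj (fst X))) (omul (snd X) (oconj (fst Y))))).
Definition Qp (p : pt) : R := 1 + onorm2 (fst p) + onorm2 (snd p).
Ltac dpt p := destruct p as [[[? ? ? ?] [? ? ? ?]] [[? ? ? ?] [? ? ? ?]]].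
Ltac dall := repeat match goal with p : pt |- _ => dpt p end.
Definition cc0 (X Y : pt) := oinner (fst X) (fst Y) + oinner (snd X) (snd Y).
Definition cW (X Y : pt) := oadd (omul (snd Y) (oconj (fst X))) (omul (snd X) (oconj (fst Y))).
Definition cc3 (A X Y : pt) := oinner (fst X) (fst Y) * onorm2 (snd A) + oinner (snd X) (snd Y) * onorm2 (fst A)
  - ore (omul (omul (fst A) (oconj (snd A))) (cW X Y)).
Definition cc4 (A B X Y : pt) := 2 * oinner (fst X) (fst Y) * oinner (snd A) (snd B)
  + 2 * oinner (snd X) (snd Y) * oinner (fst A) (fst B)
  - ore (omul (oadd (omul (fst A) (oconj (snd B))) (omul (fst B) (oconj (snd A)))) (cW X Y)).
Definition ee1 (A : pt) := onorm2 (fst A) + onorm2 (snd A).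
Definition ee2 (A B : pt) := 2 * (oinner (fst A) (fst B) + oinner (snd A) (snd B)).
Definition H (A B X Y : pt) := cc4 A B X Y - 2 * cc0 X Y * ee2 A B.
Ltac red0 := dall; cbv beta iota zeta delta [Ng Qp cc0 cW cc3 cc4 ee1 ee2 H gmet ds2 onorm2 oinner ore omul oconj oadd osub oopp oscal padd pscal P0 ozero qadd qmul qconj qopp qscal oa ob q0 q1 q2 q3 fst snd]; idtac.

Ltac crush := red0; ring.

Definition Dcurv (A B C D : pt) : R := / 2 * (H A D B C + H B C A D - H B D A C - H A C B D).

Lemma gmet_eq p X Y : gmet p X Y = Ng p X Y / (Qp p)^2.
Proof. unfold gmet, ds2, Ng, Qp. cbv zeta. unfold Rdiv.
  set (iD := / (1 + onorm2 (fst p) + onorm2 (snd p))^2). clearbody iD. red0. field. Qed.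
Lemma Ng_line A B X Y s t : Ng (padd (padd P0 (pscal s A)) (pscal t B)) X Y =
  cc0 X Y + cc3 A X Y * s^2 + cc4 A B X Y * s * t + cc3 B X Y * t^2.
Proof. crush. Qed.
Lemma Qp_line A B s t : Qp (padd (padd P0 (pscal s A)) (pscal t B)) =
  1 + ee1 A * s^2 + ee2 A B * s * t + ee1 B * t^2.
Proof. crush. Qed.
Lemma Ng_line1 B X Y t : Ng (padd P0 (pscal t B)) X Y = cc0 X Y + cc3 B X Y * t^2.
Proof. crush. Qed.
Lemma Qp_line1 B t : Qp (padd P0 (pscal t B)) = 1 + ee1 B * t^2.
Proof. crush. Qed.

Lemma d2g_eq a b c d : d2g a b c d = H (pt_e a) (pt_e b) (pt_e c) (pt_e d).
Proof.
  unfold d2g, partial.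
  rewrite (Derive_ext _ (fun s => Derive (fun t => F (cc0 (pt_e c) (pt_e d)) (cc3 (pt_e a) (pt_e c) (pt_e d))
     (cc4 (pt_e a) (pt_e b) (pt_e c) (pt_e d)) (cc3 (pt_e b) (pt_e c) (pt_e d))
     (ee1 (pt_e a)) (ee2 (pt_e a) (pt_e b)) (ee1 (pt_e b)) s t) 0)).
  - rewrite mixed. unfold H. ring.
  - intros s. apply Derive_ext. intros t. unfold gcomp, F.
    rewrite gmet_eq, Ng_line, Qp_line. reflexivity.
Qed.

Lemma first_order i j k : partial k (gcomp i j) P0 = 0.
Proof.
  unfold partial.
  rewrite (Derive_ext _ (fun t => F (cc0 (pt_e i) (pt_e j)) 0 0 (cc3 (pt_e k) (pt_e i) (pt_e j)) 0 0 (ee1 (pt_e k)) 0 t)).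
  - apply first.
  - intros t. unfold gcomp, F. rewrite gmet_eq, Ng_line1, Qp_line1. f_equal; [|f_equal]; ring.
Qed.

Lemma H_lin1 a b p q B X Y : H (padd (pscal a p) (pscal b q)) B X Y = a * H p B X Y + b * H q B X Y.
Proof. crush. Qed.
Lemma H_lin3 a b p q B X Y : H B Y (padd (pscal a p) (pscal b q)) X = a * H B Y p X + b * H B Y q X.
Proof. crush. Qed.
Lemma H_sym12 A B X Y : H A B X Y = H B A X Y.
Proof. crush. Qed.
Lemma H_sym34 A B X Y : H A B X Y = H A B Y X.
Proof. crush. Qed.
Lemma H_lin2 a b p q B X Y : H B (padd (pscal a p) (pscal b q)) X Y = a * H B p X Y + b * H B q X Y.
Proof. rewrite H_sym12, H_lin1, (H_sym12 p), (H_sym12 q). reflexivity. Qed.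
Lemma H_lin4 a b p q B X Y : H B Y X (padd (pscal a p) (pscal b q)) = a * H B Y X p + b * H B Y X q.
Proof. rewrite H_sym34, H_lin3, (H_sym34 _ _ p), (H_sym34 _ _ q). reflexivity. Qed.

Ltac hlin := unfold Dcurv; rewrite ?H_lin1, ?H_lin2, ?H_lin3, ?H_lin4; ring.
Lemma D_lin1 a b p q B C D : Dcurv (padd (pscal a p) (pscal b q)) B C D = a * Dcurv p B C D + b * Dcurv q B C D.
Proof. hlin. Qed.
Lemma D_lin2 a b p q B C D : Dcurv B (padd (pscal a p) (pscal b q)) C D = a * Dcurv B p C D + b * Dcurv B q C D.
Proof. hlin. Qed.
Lemma D_lin3 a b p q B C D : Dcurv B C (padd (pscal a p) (pscal b q)) D = a * Dcurv B C p D + b * Dcurv B C q D.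
Proof. hlin. Qed.
Lemma D_lin4 a b p q B C D : Dcurv B C D (padd (pscal a p) (pscal b q)) = a * Dcurv B C D p + b * Dcurv B C D q.
Proof. hlin. Qed.

Ltac recf := repeat match goal with
  | |- Quat _ _ _ _ = Quat _ _ _ _ => f_equal
  | |- POct _ _ = POct _ _ => f_equal
  | |- pair _ _ = pair _ _ => f_equal end.

Lemma pscal1 p : pscal 1 p = p.
Proof. dall. unfold pscal, oscal, qscal; simpl. recf; ring. Qed.
Lemma padd_scal0 t p : padd (pscal t p) (pscal 0 p) = pscal t p.
Proof. dall. unfold padd, pscal, oadd, oscal, qadd, qscal; simpl. recf; ring. Qed.

Definition decomp (W : pt) : pt :=
  padd (pscal (pt_coord 0 W) (pt_e 0)) (padd (pscal (pt_coord 1 W) (pt_e 1))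
  (padd (pscal (pt_coord 2 W) (pt_e 2)) (padd (pscal (pt_coord 3 W) (pt_e 3))
  (padd (pscal (pt_coord 4 W) (pt_e 4)) (padd (pscal (pt_coord 5 W) (pt_e 5))
  (padd (pscal (pt_coord 6 W) (pt_e 6)) (padd (pscal (pt_coord 7 W) (pt_e 7))
  (padd (pscal (pt_coord 8 W) (pt_e 8)) (padd (pscal (pt_coord 9 W) (pt_e 9))
  (padd (pscal (pt_coord 10 W) (pt_e 10)) (padd (pscal (pt_coord 11 W) (pt_e 11))
  (padd (pscal (pt_coord 12 W) (pt_e 12)) (padd (pscal (pt_coord 13 W) (pt_e 13))
  (padd (pscal (pt_coord 14 W) (pt_e 14)) (pscal (pt_coord 15 W) (pt_e 15)))))))))))))))).

Ltac redE := cbv beta iota zeta delta [pt_e oct_e quat_e kron pt_coord oct_coord quat_coord Nat.ltb Nat.leb Nat.eqb Nat.sub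
  padd pscal oadd oscal qadd qscal ozero qzero oa ob q0 q1 q2 q3 fst snd].
Lemma decomp_eq W : decomp W = W.
Proof. dall. unfold decomp. redE. recf; ring. Qed.

Lemma sum_lin (L : pt -> R) :
  (forall a b p q, L (padd (pscal a p) (pscal b q)) = a * L p + b * L q) ->
  forall W, sum16 (fun d => L (pt_e d) * pt_coord d W) = L W.
Proof.
  intros HL W.
  assert (Hadd : forall p q, L (padd p q) = L p + L q).
  { intros p q. rewrite <- (pscal1 p), <- (pscal1 q), HL, !pscal1. ring. }
  assert (Hsc : forall t p, L (pscal t p) = t * L p).
  { intros t p. rewrite <- padd_scal0, HL. ring. }
  transitivity (L (decomp W)); [| now rewrite decomp_eq]. unfold decomp. rewrite !Hadd, !Hsc.
  unfold sum16. simpl sum_f_R0. ring.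
Qed.

Lemma Rcomp_eq a b c d : Rcomp a b c d = Dcurv (pt_e a) (pt_e b) (pt_e c) (pt_e d).
Proof. unfold Rcomp, Dcurv. rewrite !d2g_eq. ring. Qed.

Lemma Rtensor_eq X Y Z W : Rtensor X Y Z W = Dcurv X Y Z W.
Proof.
  unfold Rtensor.
  transitivity (sum16 (fun a => sum16 (fun b => sum16 (fun c =>
     Dcurv (pt_e a) (pt_e b) (pt_e c) W * pt_coord a X * pt_coord b Y * pt_coord c Z)))).
  { apply sum_eq; intros a _. apply sum_eq; intros b _. apply sum_eq; intros c _.
    rewrite <- (sum_lin (fun V => Dcurv (pt_e a) (pt_e b) (pt_e c) V * pt_coord a X * pt_coord b Y * pt_coord c Z)).
    - apply sum_eq; intros d _. rewrite Rcomp_eq. ring.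
    - intros. rewrite D_lin4. ring. }
  transitivity (sum16 (fun a => sum16 (fun b =>
     Dcurv (pt_e a) (pt_e b) Z W * pt_coord a X * pt_coord b Y))).
  { apply sum_eq; intros a _. apply sum_eq; intros b _.
    rewrite <- (sum_lin (fun V => Dcurv (pt_e a) (pt_e b) V W * pt_coord a X * pt_coord b Y)).
    - apply sum_eq; intros c _. ring.
    - intros. rewrite D_lin3. ring. }
  transitivity (sum16 (fun a => Dcurv (pt_e a) Y Z W * pt_coord a X)).
  { apply sum_eq; intros a _.
    rewrite <- (sum_lin (fun V => Dcurv (pt_e a) V Z W * pt_coord a X)).
    - apply sum_eq; intros b _. ring.
    - intros. rewrite D_lin2. ring. }
  apply (sum_lin (fun V => Dcurv V Y Z W)).
  intros. apply D_lin1.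
Qed.

Lemma final a b c d e f g h :
  Dcurv (a, b) (c, d) (e, f) (g, h) =
       4 * oinner a e * oinner c g - 4 * oinner c e * oinner a g
     + 4 * oinner b f * oinner d h - 4 * oinner d f * oinner b h
     - oinner (omul e (oconj d)) (omul g (oconj b))
     + oinner (omul e (oconj b)) (omul g (oconj d))
     - oinner (omul c (oconj f)) (omul a (oconj h))
     + oinner (omul a (oconj f)) (omul c (oconj h))
     - oinner (osub (omul a (oconj d)) (omul c (oconj b)))
              (osub (omul g (oconj f)) (omul e (oconj h))).
Proof.
  unfold Dcurv.
  destruct a as [[? ? ? ?] [? ? ? ?]], b as [[? ? ? ?] [? ? ? ?]], c as [[? ? ? ?] [? ? ? ?]],
    d as [[? ? ? ?] [? ? ? ?]], e as [[? ? ? ?] [? ? ? ?]], f as [[? ? ? ?] [? ? ? ?]],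
    g as [[? ? ? ?] [? ? ? ?]], h as [[? ? ? ?] [? ? ? ?]].
  red0. field.
Qed.

Theorem corollary6p8 :
  (* the chart coordinates are normal to first order at P0, so the curvature
     convention applies in them *)
  (forall i j k : nat, (i < 16)%nat -> (j < 16)%nat -> (k < 16)%nat ->
     partial k (gcomp i j) P0 = 0) /\
  (forall a b c d e f g h : poct,
     Rtensor (a, b) (c, d) (e, f) (g, h) =
       4 * oinner a e * oinner c g - 4 * oinner c e * oinner a g
     + 4 * oinner b f * oinner d h - 4 * oinner d f * oinner b h
     - oinner (omul e (oconj d)) (omul g (oconj b))
     + oinner (omul e (oconj b)) (omul g (oconj d))
     - oinner (omul c (oconj f)) (omul a (oconj h))
     + oinner (omul a (oconj f)) (omul c (oconj h))
     - oinner (osub (omul a (oconj d)) (omul c (oconj b)))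
              (osub (omul g (oconj f)) (omul e (oconj h)))).
Proof.
  split.
  - intros i j k _ _ _. apply first_order.
  - intros. rewrite Rtensor_eq. apply final.
Qed.
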